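(* Let $(\mathcal{T},\mathcal{F},\mathcal{S})$ be a tree of fusion systems satisfying $(H)$, with completion $\mathcal{F}_\mathcal{T}$ on $S:=\mathcal{S}(v_* )$, and fix $P\le S$. Then: (a) The connected component of the vertex $[\iota_P^S]_{\mathcal{F}(v_* )}$ in the $P$-orbit graph $\operatorname{Rep}(P,\mathcal{F})$ is equal to (isomorphic to) the subgraph $\operatorname{Rep}_{\mathcal{F}_\mathcal{T}}(P,\mathcal{F})$. (b) The map $\Phi_P:\pi_0(\operatorname{Rep}(P,\mathcal{F}))\to\operatorname{Rep}(P,\mathcal{F}_\mathcal{T})$ sending the connected component of a vertex $[\alpha]_{\mathcal{F}(v)}$ to $[\alpha\circ\iota_{\mathcal{S}(v)}^S]_{\mathcal{F}_\mathcal{T}}$ is a well-defined bijection.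
   Context: Conventions: homomorphisms act on the right, $\alpha\circ\beta$ means first $\alpha$ then $\beta$, $\iota$ denotes inclusions. Fusion systems, morphisms of fusion systems, trees of fusion systems $(\mathcal{T},\mathcal{F},\mathcal{S})$ (finite tree $\mathcal{T}$; finite $p$-groups $\mathcal{S}(v),\mathcal{S}(e)$ with monomorphisms $\mathcal{S}(f_{ev}):\mathcal{S}(e)\to\mathcal{S}(v)$ for $v$ incident on $e$; fusion systems $\mathcal{F}(v)$ on $\mathcal{S}(v)$, $\mathcal{F}(e)$ on $\mathcal{S}(e)$ with $\mathcal{S}(f_{ev})$ an injective morphism of fusion systems) are as usual. Hypothesis $(H)$: there is a vertex $v_*$ such that for every vertex $v\neq v_*$, the edge $e$ incident on $v$ on the minimal path from $v$ to $v_*$ has $\mathcal{S}(f_{ev})$ an isomorphism. Under $(H)$ all $\mathcal{S}(v),\mathcal{S}(e)$ are identified with subgroups of $S=\mathcal{S}(v_* )$ so that the $\mathcal{S}(f_{ev})$ are inclusions, and the completion is $\mathcal{F}_\mathcal{T}:=\langle\operatorname{Hom}_{\mathcal{F}(v)}(Q,\mathcal{S}(v))\mid Q\le\mathcal{S}(v), v\in V(\mathcal{T})\rangle_S$, the smallest fusion system on $S$ containing all $\mathcal{F}(v)$. For a fusion system $\mathcal{K}$ on $T$ and a $p$-group $P$, define $\alpha\sim\beta$ on $\operatorname{Hom}(P,T)$ iff there is $\gamma\in\operatorname{Iso}_\mathcal{K}(P\alpha,P\beta)$ with $\alpha\circ\gamma=\beta$; $\operatorname{Rep}(P,\mathcal{K}):=\operatorname{Hom}(P,T)/\!\sim$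 with classes $[\alpha]_\mathcal{K}$; if $\hat{\mathcal{K}}\supseteq\mathcal{K}$ is a fusion system, $\operatorname{Rep}_{\hat{\mathcal{K}}}(P,\mathcal{K}):=\operatorname{Hom}_{\hat{\mathcal{K}}}(P,T)/\!\sim$. The $P$-orbit graph $\operatorname{Rep}(P,\mathcal{F})$ has vertex set the disjoint union over $v\in V(\mathcal{T})$ of $\operatorname{Rep}(P,\mathcal{F}(v))$ and edge set the disjoint union over $e\in E(\mathcal{T})$ of $\operatorname{Rep}(P,\mathcal{F}(e))$; an edge $[\gamma]_{\mathcal{F}(e)}$ with $e=(v,w)$ joins $[\gamma\circ\iota_{\mathcal{S}(e)}^{\mathcal{S}(v)}]_{\mathcal{F}(v)}$ and $[\gamma\circ\iota_{\mathcal{S}(e)}^{\mathcal{S}(w)}]_{\mathcal{F}(w)}$. For $P\le S$ under $(H)$, $\operatorname{Rep}_{\mathcal{F}_\mathcal{T}}(P,\mathcal{F})$ is the subgraph with vertices $\operatorname{Rep}_{\mathcal{F}_\mathcal{T}}(P,\mathcal{F}(v))$ and edges $\operatorname{Rep}_{\mathcal{F}_\mathcal{T}}(P,\mathcal{F}(e))$ (classes of morphisms lying in $\mathcal{F}_\mathcal{T}$). *)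

(* Defs.v *)
From Stdlib Require Import Relations.
From HB Require Import structures.
From mathcomp Require Import all_boot all_order all_fingroup all_solvable.
Set Implicit Arguments. Unset Strict Implicit. Unset Printing Implicit Defensive.

Local Open Scope group_scope.

Section Fusion.
Variable gT : finGroupType.

(* Maps are plain functions gT -> gT acting on a source subgroup; only their
   values on the source matter (fusion systems are required to be
   extensional).  Composition "first f then g" is  fun x => g (f x). *)

Definition grp_hom (P T : {set gT}) (a : gT -> gT) : Prop :=
  {in P &, {morph a : x y / x * y}} /\ a @: P \subset T.

(* A (candidate) fusion system: F P f  means  f in Hom_F(P, S), i.e. f is a
   morphism of F with source P (codomain = any subgroup containing f(P)). *)
Definition fusion_pred := {set gT} -> (gT -> gT) -> Prop.

(* Fusion system on S (in the usual sense, not necessarily saturated). *)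
Record is_fusion (S : {set gT}) (F : fusion_pred) : Prop := {
  fus_mor : forall P f, F P f ->
     [/\ group_set P, P \subset S, {in P &, {morph f : x y / x * y}},
         {in P &, injective f} & f @: P \subset S];
  fus_ext : forall P f g, F P f -> {in P, f =1 g} -> F P g;
  fus_conj : forall P s, group_set P -> P \subset S -> s \in S ->
     F P (fun x => x ^ s);
  fus_res : forall P Q f, F P f -> group_set Q -> Q \subset P -> F Q f;
  fus_comp : forall P f g, F P f -> F (f @: P) g -> F P (fun x => g (f x));
  fus_inv : forall P f, F P f ->
     exists g, F (f @: P) g /\ {in P, forall x, g (f x) = x}
}.

Definition rep_equiv (K : fusion_pred) (T P : {set gT}) (a b : gT -> gT)
  : Prop :=
  grp_hom P T a /\ grp_hom P T b /\
  exists c, K (a @: P) c /\ c @: (a @: P) = b @: P /\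
            {in P, forall x, c (a x) = b x}.

End Fusion.

Section Trees.
Variables V E : finType.
Variables src tgt : E -> V.

Definition tree_adj (A : pred E) : rel V := fun v w =>
  [exists e, A e && (((src e == v) && (tgt e == w)) ||
                     ((src e == w) && (tgt e == v)))].

Definition is_tree : Prop :=
  (forall v w, connect (tree_adj predT) v w) /\ #|E|.+1 = #|V|.
End Trees.

(* A tree of fusion systems, already in the form given by (H): all the
   groups S(v), S(e) are subgroups of one finite group, and the maps
   S(f_ev) are inclusions. *)
Record fus_tree (gT : finGroupType) (V E : finType) := FusTree {
  ft_src : E -> V;
  ft_tgt : E -> V;
  ft_vstar : V;
  ft_Sv : V -> {group gT};
  ft_Se : E -> {group gT};
  ft_Fv : V -> fusion_pred gT;
  ft_Fe : E -> fusion_pred gT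
}.

Section TreeOfFusion.
Variables (gT : finGroupType) (V E : finType) (T : fus_tree gT V E).

Local Notation src := (ft_src T).
Local Notation tgt := (ft_tgt T).
Local Notation vstar := (ft_vstar T).
Local Notation Sv := (ft_Sv T).
Local Notation Se := (ft_Se T).
Local Notation Fv := (ft_Fv T).
Local Notation Fe := (ft_Fe T).

Definition ft_S : {group gT} := Sv vstar.

Definition is_fusion_tree (p : nat) : Prop :=
  [/\ is_tree src tgt,
      prime p /\ p.-group ft_S,
      (forall v, Sv v \subset ft_S)
        /\ (forall e, Se e \subset Sv (src e) /\ Se e \subset Sv (tgt e)),
      (forall v, is_fusion (Sv v) (Fv v)) /\ (forall e, is_fusion (Se e) (Fe e))
    & forall e Q f, Fe e Q f -> Fv (src e) Q f /\ Fv (tgt e) Q f].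

(* Hypothesis (H): for v <> v_*, the edge e incident on v lying on the minimal
   path from v to v_* (i.e. whose removal disconnects v from v_* ) has
   S(f_ev) an isomorphism, i.e. S(e) = S(v). *)
Definition hypH : Prop :=
  forall v e, v != vstar -> (src e == v) || (tgt e == v) ->
    ~~ connect (tree_adj src tgt (predC1 e)) v vstar ->
    Se e = Sv v :> {set gT}.

Definition completion : fusion_pred gT := fun P f =>
  forall G : fusion_pred gT, is_fusion ft_S G ->
    (forall v Q g, Fv v Q g -> G Q g) -> G P f.

(* The P-orbit graph Rep(P, F): a vertex [a]_{F(v)} is represented by a
   pair (v, a) with a in Hom(P, S(v)).  Two representatives are joined by a
   step if they represent the same vertex, or are the two endpoints of an
   edge [c]_{F(e)}, c in Hom(P, S(e)). *)
Definition orbit_step (P : {set gT}) (x y : V * (gT -> gT)) : Prop :=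
  (x.1 = y.1 /\ rep_equiv (Fv x.1) (Sv x.1) P x.2 y.2) \/
  exists e c, grp_hom P (Se e) c /\
    ((src e = x.1 /\ tgt e = y.1) \/ (src e = y.1 /\ tgt e = x.1)) /\
    rep_equiv (Fv x.1) (Sv x.1) P c x.2 /\
    rep_equiv (Fv y.1) (Sv y.1) P c y.2.

Definition orbit_conn (P : {set gT}) : relation (V * (gT -> gT)) :=
  clos_refl_sym_trans _ (orbit_step P).

End TreeOfFusion.

(* Main.v *)
Require Import Defs.
From Stdlib Require Import Relations.
From mathcomp Require Import all_boot all_order all_fingroup all_solvable.
Set Implicit Arguments. Unset Strict Implicit. Unset Printing Implicit Defensive.
Section Graph.
Variables (V E : finType) (src tgt : E -> V).
Local Notation adj := (tree_adj src tgt).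

Lemma adj_sym (A : pred E) : symmetric (adj A).
Proof. by move=> x y; apply: eq_existsb => f; rewrite orbC. Qed.

Fixpoint reach (A : pred E) (r : V) (n : nat) (v : V) : bool :=
  if n is m.+1 then reach A r m v || [exists w, adj A v w && reach A r m w]
  else v == r.

Lemma reachS (A : pred E) r n v : reach A r n v -> reach A r n.+1 v.
Proof. by move=> h; rewrite /= h. Qed.

Lemma connect_reach (A : pred E) r v : connect (adj A) v r -> exists n, reach A r n v.
Proof.
case/connectP=> pth; elim: pth v => [|w pth IH] v /=.
  by move=> _ eq; exists 0; rewrite /= eq.
case/andP=> avw pw lst; have [n hn] := IH w pw lst.
exists n.+1; apply/orP; right; apply/existsP; exists w; by rewrite avw.
Qed.

Lemma adj_edge (A : pred E) v w : adj A v w ->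
  exists2 f, A f & (src f = v /\ tgt f = w) \/ (src f = w /\ tgt f = v).
Proof.
case/existsP=> f /andP[Af /orP[/andP[/eqP h1 /eqP h2]|/andP[/eqP h1 /eqP h2]]].
  by exists f => //; left.
by exists f => //; right.
Qed.

Lemma edge_adj (A : pred E) f v w : A f ->
  (src f = v /\ tgt f = w) \/ (src f = w /\ tgt f = v) -> adj A v w.
Proof.
move=> Af h; apply/existsP; exists f; rewrite Af /=.
by case: h => [[-> ->]|[-> ->]]; rewrite !eqxx ?orbT.
Qed.

Lemma reach_avoid r n v e : reach predT r n v ->
  ~~ reach predT r n (src e) || ~~ reach predT r n (tgt e) ->
  connect (adj (predC1 e)) v r.
Proof.
elim: n v => [|n IH] v /=.
  by move=> /eqP -> _; exact: connect0.
move=> hv hout.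
have hout' : ~~ reach predT r n (src e) || ~~ reach predT r n (tgt e).
  by case/orP: hout => /negP h; apply/orP; [left|right]; apply/negP => h';
     apply: h; rewrite h'.
case/orP: hv => [hv|/existsP[w /andP[avw hw]]]; first exact: IH.
have [f _ hf] := adj_edge avw.
have fe : f != e.
  apply/eqP => fe; subst f; move: hout.
  have hvv : reach predT r n.+1 v by rewrite /= orbC; apply/orP; left;
    apply/existsP; exists w; rewrite avw.
  have hww : reach predT r n.+1 w by apply: reachS.
  by case: hf => [[-> ->]|[-> ->]]; move: hvv hww => /= -> ->.
apply: connect_trans (IH w hw hout'); apply: connect1.
exact: edge_adj hf.
Qed.

Lemma count_edges (A : pred E) r : (forall v, connect (adj A) v r) ->
  #|V| <= #|A| + 1.
Proof.
move=> conn.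
have ex v : exists n, reach A r n v by apply: connect_reach.
pose d v := ex_minn (ex v).
have dP v : reach A r (d v) v /\ forall n, reach A r n v -> d v <= n.
  by rewrite /d; case: ex_minnP.
have good v : v != r -> exists f, A f &&
   (((src f == v) && (d (tgt f) < d v)) || ((tgt f == v) && (d (src f) < d v))).
  move=> vr; have [h1 h2] := dP v; move: h1 h2.
  case: (d v) => [|m] /=; first by rewrite (negbTE vr).
  case/orP=> [hm|/existsP[w /andP[avw hw]]] hmin.
    by have := hmin _ hm; rewrite ltnn.
  have dw : d w < m.+1 by rewrite ltnS; apply: (proj2 (dP w)).
  have [f Af hf] := adj_edge avw; exists f; rewrite Af /=.
  by case: hf => [[-> ->]|[-> ->]]; rewrite eqxx dw ?orbT.
pose g v := [pick f | A f &&
   (((src f == v) && (d (tgt f) < d v)) || ((tgt f == v) && (d (src f) < d v)))].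
have gS v : v != r -> exists2 f, g v = Some f & A f &&
   (((src f == v) && (d (tgt f) < d v)) || ((tgt f == v) && (d (src f) < d v))).
  move=> vr; rewrite /g; case: pickP => [f hf|hn]; first by exists f.
  by have [f hf] := good v vr; rewrite hn in hf.
have ginj : {in [set~ r] &, injective g}.
  move=> v v'; rewrite !in_setC1 => vr vr' eqg.
  have [f hf /andP[_ H1]] := gS v vr; have [f' hf' /andP[_ H2]] := gS v' vr'.
  move: eqg; rewrite hf hf' => -[ff]; subst f'.
  case/orP: H1 => /andP[/eqP s1 l1]; case/orP: H2 => /andP[/eqP s2 l2];
    try by rewrite -s1 -s2.
    by move: l1 l2; rewrite -s1 -s2 => l1 l2; have := ltn_trans l1 l2; rewrite ltnn.
  by move: l1 l2; rewrite -s1 -s2 => l1 l2; have := ltn_trans l1 l2; rewrite ltnn.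
have sub : g @: [set~ r] \subset Some @: [set f | A f].
  apply/subsetP => _ /imsetP[v vr ->]; rewrite in_setC1 in vr.
  have [f -> /andP[Af _]] := gS v vr; apply/imsetP; exists f => //.
  by rewrite inE.
have := subset_leq_card sub.
rewrite card_in_imset // card_imset; last exact: Some_inj.
rewrite cardsC1 cardsE.
have : 0 < #|V| by apply/card_gt0P; exists r.
by case: #|V| => // n _; rewrite addn1.
Qed.

Lemma bridge : is_tree src tgt -> forall e, ~~ connect (adj (predC1 e)) (src e) (tgt e).
Proof.
move=> [conn card] e; apply/negP => h.
have sy := adj_sym (predC1 e).
have all v : connect (adj (predC1 e)) v (src e).
  apply: (connect_sub _ (conn v (src e))) => x y /adj_edge[f _ hf].
  have [fe|fe] := eqVneq f e.
    subst f; case: hf => [[<- <-]|[<- <-]]; first exact: h.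
    by rewrite (sym_connect_sym sy).
  by apply: connect1; apply: edge_adj hf.
have := count_edges all; rewrite cardC1.
have : 0 < #|E| by apply/card_gt0P; exists e.
rewrite -card; case: #|E| => // n _ /=; rewrite addn1 ltnn.
done.
Qed.

Lemma tree_ind (vs : V) (Pr : V -> Prop) : is_tree src tgt -> Pr vs ->
  (forall v w e, v != vs -> (src e = v /\ tgt e = w) \/ (src e = w /\ tgt e = v) ->
     ~~ connect (adj (predC1 e)) v vs -> Pr w -> Pr v) ->
  forall v, Pr v.
Proof.
move=> tr P0 Pstep v.
have [n hn] := connect_reach (proj1 tr v vs).
elim: n v hn => [|n IH] v /=; first by move/eqP ->.
have [hv|hv] := boolP (reach predT vs n v); first by move=> _; exact: IH.
case/orP=> [//|/existsP[w /andP[avw hw]]].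
have [vvs|vvs] := eqVneq v vs; first by rewrite vvs.
have [f _ hf] := adj_edge avw.
apply: (Pstep v w f) => //; last exact: IH.
apply/negP => c.
have c2 : connect (adj (predC1 f)) w vs.
  apply: (reach_avoid hw).
  by case: hf => [[-> _]|[_ ->]]; rewrite hv ?orbT.
have sy := adj_sym (predC1 f).
have cvw : connect (adj (predC1 f)) v w.
  by apply: connect_trans c _; rewrite (sym_connect_sym sy).
have := bridge tr f.
by case: hf => [[-> ->]|[-> ->]]; rewrite ?cvw // (sym_connect_sym sy) cvw.
Qed.
End Graph.
Local Open Scope group_scope.
Section FusLemmas.
Variable gT : finGroupType.
Implicit Types (P Q R : {set gT}) (K : fusion_pred gT) (f g a b c x y : gT -> gT).

Lemma hom1 P f : group_set P -> {in P &, {morph f : u v / u * v}} -> f 1 = 1.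
Proof.
move=> /group_setP[P1 _] fM; have := fM 1 1 P1 P1; rewrite mulg1.
by move/(congr1 (mulg (f 1)^-1)); rewrite mulVg mulKg.
Qed.

Lemma img_group P f : group_set P -> {in P &, {morph f : u v / u * v}} ->
  group_set (f @: P).
Proof.
move=> gP fM; have /group_setP[P1 PM] := gP; apply/group_setP; split.
  by apply/imsetP; exists 1 => //; rewrite (hom1 gP fM).
by move=> _ _ /imsetP[u Pu ->] /imsetP[v Pv ->]; rewrite -fM //; apply: imset_f; apply: PM.
Qed.

Lemma imset_idf (P : {set gT}) : id @: P = P.
Proof. exact: imset_id. Qed.

Lemma ghom_id P R : P \subset R -> grp_hom P R id.
Proof. by move=> sPR; split => // ; rewrite imset_idf. Qed.

Lemma ghom_id' P R : P \subset R -> grp_hom P R (fun u => u).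
Proof. by move=> sPR; split => // ; rewrite imset_id. Qed.

Lemma ghom_sub P R R' f : grp_hom P R f -> R \subset R' -> grp_hom P R' f.
Proof. by move=> [fM sf] sR; split => //; apply: subset_trans sR. Qed.

Lemma ghom_img P R f : grp_hom P R f -> grp_hom P (f @: P) f.
Proof. by move=> [fM _]; split. Qed.

Lemma ghom_comp P Q R a f : grp_hom P Q a -> grp_hom Q R f ->
  grp_hom P R (fun u => f (a u)).
Proof.
move=> [aM aS] [fM fS].
have aQ u : u \in P -> a u \in Q by move=> Pu; apply: (subsetP aS); apply: imset_f.
split; first by move=> u v Pu Pv /=; rewrite aM // fM // aQ.
rewrite (imset_comp f a); apply: subset_trans fS; apply: imsetS; done.
Qed.

Lemma ghom_ext P R f g : grp_hom P R f -> {in P, f =1 g} -> group_set P ->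
  grp_hom P R g.
Proof.
move=> [fM fS] e /group_setP[_ PM]; split.
  by move=> u v Pu Pv; rewrite -!e ?PM // fM.
by rewrite -(eq_in_imset e).
Qed.

Lemma re_mono K K' (T T' : {set gT}) P a b : (forall Q f, K Q f -> K' Q f) ->
  T \subset T' -> rep_equiv K T P a b -> rep_equiv K' T' P a b.
Proof.
move=> KK sT [ha [hb [c [Kc [ic vc]]]]]; split; first exact: ghom_sub ha sT.
split; first exact: ghom_sub hb sT.
by exists c; split; [apply: KK|].
Qed.

Lemma re_ext K (T : {group gT}) P a b : is_fusion T K -> group_set P ->
  grp_hom P T a -> {in P, a =1 b} -> rep_equiv K T P a b.
Proof.
move=> fK gP ha e; split => //; split; first exact: ghom_ext ha e gP.
have [aM aS] := ha.
exists id; split.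
  have h1 := fus_conj fK (img_group gP aM) aS (group1 T).
  by apply: (fus_ext fK h1) => u _; rewrite conjg1.
by rewrite imset_idf; split; [apply: eq_in_imset | ].
Qed.

Lemma re_sym K (T : {set gT}) P a b : is_fusion T K ->
  rep_equiv K T P a b -> rep_equiv K T P b a.
Proof.
move=> fK [ha [hb [c [Kc [ic vc]]]]]; split => //; split => //.
have [g [Kg gK]] := fus_inv fK Kc.
exists g; rewrite ic in Kg; split => //; split.
  rewrite -ic -imset_comp; rewrite (eq_in_imset (g := id)) ?imset_idf //.
by move=> u Pu; rewrite -vc // gK // imset_f.
Qed.

Lemma re_trans K (T : {set gT}) P a b d : is_fusion T K ->
  rep_equiv K T P a b -> rep_equiv K T P b d -> rep_equiv K T P a d.
Proof.
move=> fK [ha [hb [c [Kc [ic vc]]]]] [_ [hd [c' [Kc' [ic' vc']]]]].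
split => //; split => //; exists (fun u => c' (c u)); split.
  by apply: (fus_comp fK Kc); rewrite ic.
split; first by rewrite (imset_comp c' c) ic ic'.
by move=> u Pu; rewrite vc // vc'.
Qed.

Lemma re_pre K (T : {set gT}) Q R a x y : is_fusion T K -> group_set R ->
  grp_hom R Q a -> rep_equiv K T Q x y ->
  rep_equiv K T R (fun r => x (a r)) (fun r => y (a r)).
Proof.
move=> fK gR ha [hx [hy [c [Kc [ic vc]]]]].
have [aM aS] := ha.
have aQ u : u \in R -> a u \in Q by move=> Pu; apply: (subsetP aS); apply: imset_f.
split; first exact: ghom_comp ha hx.
split; first exact: ghom_comp ha hy.
exists c; split.
  apply: (fus_res fK Kc).
    by have [hM _] := ghom_comp ha hx; apply: img_group gR hM.
  by rewrite (imset_comp x a); apply: imsetS.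
split; last by move=> u Ru; rewrite vc ?aQ.
rewrite -imset_comp.
by apply: eq_in_imset => u Ru; rewrite /comp vc ?aQ.
Qed.

Definition pinv P f (v : gT) := odflt v [pick u in P | f u == v].

Lemma pinvK P f : {in P &, injective f} -> {in P, forall u, pinv P f (f u) = u}.
Proof.
move=> inj u Pu; rewrite /pinv; case: pickP => [w /andP[Pw /eqP e]|h] /=.
  by apply: inj.
by have := h u; rewrite Pu eqxx.
Qed.

Lemma pinv_hom P f : group_set P -> {in P &, {morph f : u v / u * v}} ->
  {in P &, injective f} ->
  [/\ {in f @: P &, {morph pinv P f : u v / u * v}},
      {in f @: P &, injective (pinv P f)},
      pinv P f @: (f @: P) = P &
      {in f @: P, forall v, f (pinv P f v) = v}].
Proof.
move=> gP fM inj; have /group_setP[_ PM] := gP; split.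
- move=> _ _ /imsetP[u Pu ->] /imsetP[v Pv ->].
  by rewrite -fM // !pinvK // PM.
- move=> _ _ /imsetP[u Pu ->] /imsetP[v Pv ->]; rewrite !pinvK // => ->.
  done.
- rewrite -imset_comp (eq_in_imset (g := id)) ?imset_idf //.
  by move=> u Pu /=; rewrite pinvK.
- by move=> _ /imsetP[u Pu ->]; rewrite pinvK.
Qed.

End FusLemmas.
Section Main.
Variables (gT : finGroupType) (V E : finType) (p : nat) (T : fus_tree gT V E).
Hypothesis HT : is_fusion_tree T p.
Hypothesis HH : hypH T.

Local Notation src := (ft_src T).
Local Notation tgt := (ft_tgt T).
Local Notation vstar := (ft_vstar T).
Local Notation Sv := (ft_Sv T).
Local Notation Se := (ft_Se T).
Local Notation Fv := (ft_Fv T).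
Local Notation Fe := (ft_Fe T).
Local Notation S := (ft_S T).
Local Notation conn := (orbit_conn T).

Lemma Sv_sub v : Sv v \subset S.
Proof. by case: HT => _ _ [h _] _ _; apply: h. Qed.
Lemma Se_sub e : Se e \subset Sv (src e) /\ Se e \subset Sv (tgt e).
Proof. by case: HT => _ _ [_ h] _ _; apply: h. Qed.
Lemma Fv_fus v : is_fusion (Sv v) (Fv v).
Proof. by case: HT => _ _ _ [h _] _; apply: h. Qed.
Lemma Fe_fus e : is_fusion (Se e) (Fe e).
Proof. by case: HT => _ _ _ [_ h] _; apply: h. Qed.
Lemma Fe_Fv e Q f : Fe e Q f -> Fv (src e) Q f /\ Fv (tgt e) Q f.
Proof. by case: HT => _ _ _ _ h; apply: h. Qed.
Lemma HTree : is_tree src tgt.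
Proof. by case: HT. Qed.

Lemma step_same Q v a b : rep_equiv (Fv v) (Sv v) Q a b -> conn Q (v, a) (v, b).
Proof. by move=> h; apply: rst_step; left. Qed.

Lemma step_edge Q e c a b : grp_hom Q (Se e) c ->
  rep_equiv (Fv (src e)) (Sv (src e)) Q c a ->
  rep_equiv (Fv (tgt e)) (Sv (tgt e)) Q c b -> conn Q (src e, a) (tgt e, b).
Proof.
move=> hc h1 h2; apply: rst_step; right; exists e, c; split => //; split => //.
by left.
Qed.

Lemma TL v Q : group_set Q -> Q \subset Sv v -> conn Q (vstar, id) (v, id).
Proof.
move: v Q; apply: (tree_ind (vs := vstar) (Pr := fun v => forall Q, group_set Q ->
   Q \subset Sv v -> conn Q (vstar, id) (v, id))) HTree _ _.
  by move=> Q _ _; apply: rst_refl.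
move=> v w e nv hend nc IH Q gQ sQ.
have ev : (src e == v) || (tgt e == v).
  by case: hend => [[-> _]|[_ ->]]; rewrite eqxx ?orbT.
have eqS := HH nv ev nc.
have sQe : Q \subset Se e by rewrite eqS.
have [s1 s2] := Se_sub e.
have reid u : Q \subset Sv u -> rep_equiv (Fv u) (Sv u) Q id id.
  by move=> squ; apply: re_ext (Fv_fus u) gQ (ghom_id squ) _.
case: hend => [[h1 h2]|[h1 h2]].
- have sw : Q \subset Sv w by rewrite -h2; apply: subset_trans s2.
  apply: rst_trans (IH Q gQ sw) _; apply: rst_sym.
  rewrite -h1 -h2; apply: step_edge (ghom_id sQe) _ _; apply: reid.
    by rewrite h1.
  by rewrite h2.
- have sw : Q \subset Sv w by rewrite -h1; apply: subset_trans s1.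
  apply: rst_trans (IH Q gQ sw) _.
  rewrite -h1 -h2; apply: step_edge (ghom_id sQe) _ _; apply: reid.
    by rewrite h1.
  by rewrite h2.
Qed.

Lemma PC Q R a x y : group_set R -> grp_hom R Q a -> conn Q x y ->
  conn R (x.1, fun r => x.2 (a r)) (y.1, fun r => y.2 (a r)).
Proof.
move=> gR ha; elim=> {x y} [x y st| x | x y _ IH | x y z _ IH1 _ IH2].
- apply: rst_step; case: st => [[e1 re]|[e [c [hc [hend [re1 re2]]]]]].
    by left; split => //; apply: re_pre (Fv_fus _) gR ha re.
  right; exists e, (fun r => c (a r)); split; first exact: ghom_comp ha hc.
  split => //; split; apply: re_pre (Fv_fus _) gR ha _ => //.
- exact: rst_refl.
- exact: rst_sym.
- exact: rst_trans IH2.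
Qed.


Definition Gs : fusion_pred gT := fun Q f =>
  [/\ group_set Q, Q \subset S, {in Q &, {morph f : x y / x * y}},
      {in Q &, injective f} & f @: Q \subset S] /\ conn Q (vstar, id) (vstar, f).

Lemma S_grp : group_set S.
Proof. exact: groupP. Qed.

Lemma Gs_fus : is_fusion S Gs.
Proof.
split.
- by move=> Q f [[gQ sQ fM finj fS] _]; split.
- move=> Q f g [[gQ sQ fM finj fS] c] e.
  have /group_setP[_ QM] := gQ.
  split; last first.
    apply: rst_trans c _; apply: step_same.
    by apply: re_ext (Fv_fus _) gQ _ e; split.
  split => //.
  + by move=> u v Qu Qv; rewrite -!e ?QM // fM.
  + by move=> u v Qu Qv; rewrite -!e // => /finj; apply.
  + by rewrite -(eq_in_imset e).
- move=> Q s gQ sQ sS; split.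
    split => //.
    + by move=> u v _ _; rewrite conjMg.
    + by move=> u v _ _; apply: conjg_inj.
    + apply/subsetP => _ /imsetP[u Qu ->]; rewrite groupJ //.
      exact: (subsetP sQ).
  apply: step_same; split; first exact: ghom_id.
  split; first split.
  + by move=> u v _ _; rewrite conjMg.
  + apply/subsetP => _ /imsetP[u Qu ->]; rewrite groupJ //.
    exact: (subsetP sQ).
  exists (fun x => x ^ s); rewrite imset_idf; split => //.
  exact: (fus_conj (Fv_fus vstar) gQ sQ sS).
- move=> Q R f [[gQ sQ fM finj fS] c] gR sRQ.
  split.
    split => //.
    + exact: subset_trans sQ.
    + by move=> u v Ru Rv; apply: fM; apply: (subsetP sRQ).
    + by move=> u v Ru Rv; apply: finj; apply: (subsetP sRQ).
    + by apply: subset_trans fS; apply: imsetS.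
  exact: (PC gR (ghom_id sRQ) c).
- move=> Q f g [[gQ sQ fM finj fS] c] [[gfQ sfQ gM ginj gS] c'].
  have fQ u : u \in Q -> f u \in f @: Q by move=> Qu; apply: imset_f.
  split.
    split => //.
    + by move=> u v Qu Qv /=; rewrite fM // gM ?fQ.
    + by move=> u v Qu Qv /= /ginj => h; apply: finj => //; apply: h; rewrite fQ.
    + by rewrite (imset_comp g f).
  apply: rst_trans c _.
  exact: (PC gQ (ghom_img (conj fM fS)) c').
- move=> Q f [[gQ sQ fM finj fS] c].
  have [pM pinj pimg pK] := pinv_hom gQ fM finj.
  exists (pinv Q f); split; last exact: pinvK.
  have gfQ := img_group gQ fM.
  split.
    by split => //; rewrite pimg.
  have hp : grp_hom (f @: Q) Q (pinv Q f) by split => //; rewrite pimg.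
  have := PC gfQ hp c => /= c2.
  apply: (@rst_trans _ _ _ (vstar, fun r => f (pinv Q f r))); last by apply: rst_sym; exact c2.
  apply: step_same; apply: re_ext (Fv_fus _) gfQ (ghom_id fS) _.
  by move=> u fu; rewrite pK.
Qed.

Lemma Fv_Gs v Q g : Fv v Q g -> Gs Q g.
Proof.
move=> Fg; have [gQ sQ gM ginj gS] := fus_mor (Fv_fus v) Fg.
have sS := Sv_sub v.
split.
  split => //; by apply: subset_trans sS.
apply: rst_trans (TL gQ sQ) _.
apply: rst_trans (_ : conn Q (v, id) (v, g)) _.
  apply: step_same; split; first exact: ghom_id.
  split; first by split.
  by exists g; rewrite imset_idf.
apply: rst_sym.
exact: (PC gQ (ghom_img (conj gM gS)) (TL (img_group gQ gM) gS)).
Qed.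

Lemma comp_Gs Q f : completion T Q f -> Gs Q f.
Proof. by move=> h; apply: h Gs_fus Fv_Gs. Qed.

Lemma Fv_comp v Q g : Fv v Q g -> completion T Q g.
Proof. by move=> h G _ sub; apply: sub h. Qed.

Lemma comp_fus : is_fusion S (completion T).
Proof.
split.
- by move=> Q f /comp_Gs [[]].
- by move=> Q f g h e G fG sub; apply: (fus_ext fG (h G fG sub) e).
- by move=> Q s gQ sQ sS G fG sub; apply: (fus_conj fG).
- by move=> Q R f h gR sRQ G fG sub; apply: (fus_res fG (h G fG sub)).
- by move=> Q f g h1 h2 G fG sub; apply: (fus_comp fG (h1 G fG sub) (h2 G fG sub)).
- move=> Q f h; have [[gQ sQ fM finj fS] _] := comp_Gs h.
  exists (pinv Q f); split; last exact: pinvK.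
  move=> G fG sub; have [g [Gg gK]] := fus_inv fG (h G fG sub).
  apply: (fus_ext fG Gg) => _ /imsetP[u Qu ->].
  by rewrite gK // pinvK.
Qed.

Section Rep.
Variable P : {group gT}.
Hypothesis PS : P \subset S.
Local Notation RE := (rep_equiv (completion T) S P).

Lemma conn_RE x y : conn P x y -> x = y \/ RE x.2 y.2.
Proof.
elim=> {x y} [x y st| x | x y _ IH | x y z _ IH1 _ IH2].
- right; case: st => [[e1 re]|[e [c [hc [hend [re1 re2]]]]]].
    exact: re_mono (@Fv_comp _) (Sv_sub _) re.
  apply: (re_trans (b := c) comp_fus (re_sym comp_fus _) _).
    exact: re_mono (@Fv_comp _) (Sv_sub _) re1.
  exact: re_mono (@Fv_comp _) (Sv_sub _) re2.
- by left.
- by case: IH => [->|h]; [left|right; apply: re_sym comp_fus h].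
- case: IH1 => [->|h1] //; case: IH2 => [<-|h2]; first by right.
  by right; apply: re_trans comp_fus h1 h2.
Qed.

Lemma b_fwd v w a b : grp_hom P (Sv v) a -> conn P (v, a) (w, b) -> RE a b.
Proof.
move=> ha /conn_RE [[_ <-]|//].
apply: re_ext comp_fus (groupP P) _ _ => //.
exact: ghom_sub ha (Sv_sub v).
Qed.

Lemma b_bwd v w a b : grp_hom P (Sv v) a -> grp_hom P (Sv w) b -> RE a b ->
  conn P (v, a) (w, b).
Proof.
move=> ha hb [_ [_ [c [Kc [ic vc]]]]].
have [aM aS] := ha; have [bM bS] := hb.
have gP := groupP P.
have [[gaP saP cM cinj cS] cc] := comp_Gs Kc.
have c1 : conn P (vstar, a) (v, a).
  exact: (PC gP (ghom_img ha) (TL (img_group gP aM) aS)).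
have c2 : conn P (vstar, a) (vstar, fun r => c (a r)).
  exact: (PC gP (ghom_img ha) cc).
have c3 : conn P (vstar, fun r => c (a r)) (vstar, b).
  apply: step_same; apply: re_ext (Fv_fus _) gP _ vc.
  by apply: ghom_comp (ghom_img ha) _; split.
have c4 : conn P (vstar, b) (w, b).
  exact: (PC gP (ghom_img hb) (TL (img_group gP bM) bS)).
apply: (rst_trans _ _ _ _ _ (rst_sym _ _ _ _ c1)).
apply: (rst_trans _ _ _ _ _ c2); exact: (rst_trans _ _ _ _ _ c3 c4).
Qed.

Lemma RE_id_comp a : RE id a -> completion T P a.
Proof.
move=> [_ [_ [c [Kc [_ vc]]]]]; rewrite imset_idf in Kc.
exact: (fus_ext comp_fus Kc vc).
Qed.

Lemma comp_RE_id a : completion T P a -> RE id a.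
Proof.
move=> h; have [_ _ aM _ aS] := fus_mor comp_fus h.
split; first exact: ghom_id.
split; first by split.
by exists a; rewrite imset_idf.
Qed.

End Rep.

End Main.
Theorem proposition2p5 (gT : finGroupType) (V E : finType) (p : nat)
    (T : fus_tree gT V E) (P : {group gT}) :
  is_fusion_tree T p -> hypH T -> P \subset ft_S T ->
  ((forall v a, grp_hom P (ft_Sv T v) a ->
      (orbit_conn T P (ft_vstar T, id) (v, a) <->
       exists b, rep_equiv (ft_Fv T v) (ft_Sv T v) P b a /\ completion T P b))
   /\ (forall e c, grp_hom P (ft_Se T e) c ->
      (orbit_conn T P (ft_vstar T, id) (ft_src T e, c) <->
       exists d, rep_equiv (ft_Fe T e) (ft_Se T e) P d c /\ completion T P d)))
  /\
  ((forall v w a b, grp_hom P (ft_Sv T v) a -> grp_hom P (ft_Sv T w) b ->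
      (orbit_conn T P (v, a) (w, b) <->
       rep_equiv (completion T) (ft_S T) P a b))
   /\ (forall b, grp_hom P (ft_S T) b ->
      exists v a, grp_hom P (ft_Sv T v) a /\
                  rep_equiv (completion T) (ft_S T) P a b)).
Proof.
move=> HT HH PS.
have gP := groupP P.
have hid : grp_hom P (ft_Sv T (ft_vstar T)) id by apply: ghom_id.
have CF := comp_fus HT HH.
split; [split|split].
- move=> v a ha; split.
  + move=> c; have h := b_fwd HT HH hid c.
    exists a; split; first exact: re_ext (Fv_fus HT v) gP ha _.
    exact (RE_id_comp HT HH h).
  + move=> [b [re cb]]; apply (b_bwd HT HH hid ha).
    apply: (re_trans CF (comp_RE_id HT HH PS cb)).
    exact: re_mono (@Fv_comp _ _ _ T v) (Sv_sub HT v) re.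
- move=> e c hc.
  have hc' : grp_hom P (ft_Sv T (ft_src T e)) c.
    exact: ghom_sub hc (proj1 (Se_sub HT e)).
  split.
  + move=> cn; have h := b_fwd HT HH hid cn.
    exists c; split; first exact: re_ext (Fe_fus HT e) gP hc _.
    exact (RE_id_comp HT HH h).
  + move=> [d [re cd]]; apply (b_bwd HT HH hid hc').
    apply: (re_trans CF (comp_RE_id HT HH PS cd)).
    apply: re_mono _ _ re.
      by move=> Q f /(Fe_Fv HT) [h _]; apply: Fv_comp h.
    exact: subset_trans (proj1 (Se_sub HT e)) (Sv_sub HT _).
- move=> v w a b ha hb; split.
    exact (b_fwd HT HH ha).
  exact (b_bwd HT HH ha hb).
- move=> b hb; exists (ft_vstar T), b; split => //.
  exact: re_ext CF gP hb _.
Qed.
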